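(* Let $\mathcal{H}=\mathbb{C}^{d_1}$, $\mathcal{K}=\mathbb{C}^{d_2}$ with $d_1\ge3$ odd, and let $\sigma_1,\dots,\sigma_{d_1d_2}\ge0$ be given. Consider the problem of minimizing $\frac1{d_1d_2}\operatorname{tr}[A\,\overline A^{T_2}]$ over all $A\in\mathcal{B}(\mathcal{H}\otimes\mathcal{K})$ with $A^T=A$ and singular values $\sigma_1,\dots,\sigma_{d_1d_2}$. Then every local minimizer $A$ of this problem satisfies that $A\,\overline A^{T_2}$ is Hermitian.
   Context: The partial transposes are taken with respect to a fixed product basis, defined by linear extension of $(X\otimes Y)^{T_1}=X^T\otimes Y$ and $(X\otimes Y)^{T_2}=X\otimes Y^T$; $\overline A$ is the entrywise complex conjugate, and $\overline A^{T_2}=(\overline A)^{T_2}$. *)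

(* Defs.v *)
From HB Require Import structures.
From mathcomp Require Import all_boot all_order all_algebra.
From mathcomp Require Import reals complex.
Set Implicit Arguments. Unset Strict Implicit. Unset Printing Implicit Defensive.
Import Order.TTheory GRing.Theory Num.Theory.
Local Open Scope ring_scope.

Section Defs.
Variables (R : realType) (d1 d2 : nat).
Local Notation C := (R[i]).
Local Notation n := (d1 * d2)%N.

(* fixed product basis: e_i (x) f_j  <->  index mxvec_index i j *)
Definition pidx (i : 'I_d1) (j : 'I_d2) : 'I_n := mxvec_index i j.
Definition unpidx (k : 'I_n) : 'I_d1 * 'I_d2 :=
  enum_val (cast_ord (esym (@mxvec_cast d1 d2)) k).

(* partial transpose on the second factor:
   A^{T2}_{(i,j),(i',j')} = A_{(i,j'),(i',j)} *)
Definition ptrans2 (A : 'M[C]_n) : 'M[C]_n :=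
  \matrix_(k, l) A (pidx (unpidx k).1 (unpidx l).2) (pidx (unpidx l).1 (unpidx k).2).

Definition entconj (A : 'M[C]_n) : 'M[C]_n := map_mx Num.conj A.

Definition ctrmx (A : 'M[C]_n) : 'M[C]_n := (entconj A)^T.

Definition is_hermitian (A : 'M[C]_n) : Prop := ctrmx A = A.

(* A has singular values sigma_1..sigma_n (with multiplicity): the eigenvalues
   of A^* A, counted with algebraic multiplicity, are the sigma_k^2 *)
Definition has_singular_values (A : 'M[C]_n) (sigma : 'I_n -> R) : Prop :=
  char_poly (ctrmx A *m A) = \prod_(k < n) ('X - (((sigma k) ^+ 2)%:C)%C%:P).

Definition feasible (sigma : 'I_n -> R) (A : 'M[C]_n) : Prop :=
  A^T = A /\ has_singular_values A sigma.

(* the objective (1/(d1 d2)) tr[A conj(A)^{T2}]; this trace is always real,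
   we take its real part *)
Definition objective (A : 'M[C]_n) : R :=
  complex.Re (\tr (A *m ptrans2 (entconj A))) / n%:R.

Definition abs2 (z : C) : R := complex.Re z ^+ 2 + complex.Im z ^+ 2.

Definition frob_dist2 (A B : 'M[C]_n) : R :=
  \sum_(k < n) \sum_(l < n) abs2 (A k l - B k l).

Definition local_minimizer (sigma : 'I_n -> R) (A : 'M[C]_n) : Prop :=
  feasible sigma A /\
  exists eps : R, 0 < eps /\
    forall B : 'M[C]_n, feasible sigma B -> frob_dist2 B A < eps ->
      objective A <= objective B.

End Defs.

(* Main.v *)
Require Import Defs.
From HB Require Import structures.
From mathcomp Require Import all_boot all_order all_algebra.
From mathcomp Require Import reals complex.
From mathcomp Require Import ring lra.
Import Order.TTheory GRing.Theory Num.Theory.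
Local Open Scope ring_scope.

Lemma char_poly_sim (F : fieldType) (m : nat) (S S' M : 'M[F]_m) :
  S' *m S = 1%:M -> char_poly (S *m M *m S') = char_poly M.
Proof.
move=> hS'S; have hSS' : S *m S' = 1%:M by apply: mulmx1C.
rewrite /char_poly /char_poly_mx.
set SP := map_mx polyC S; set SP' := map_mx polyC S'.
have e1 : SP *m SP' = 1%:M by rewrite -map_mxM hSS' map_mx1.
have e2 : SP' *m SP = 1%:M by rewrite -map_mxM hS'S map_mx1.
have -> : 'X%:M - map_mx polyC (S *m M *m S') =
   SP *m ('X%:M - map_mx polyC M) *m SP'.
  rewrite !map_mxM -/SP -/SP' mulmxBr mulmxBl -!mulmxA.
  by rewrite -scalar_mxC [SP *m (SP' *m _)]mulmxA e1 mul1mx.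
rewrite !det_mulmx mulrC mulrA -det_mulmx e2 det1 mul1r //.
Qed.

Lemma small_t (R : realType) (x y z : R) : 0 < x -> 0 < y -> 0 < z ->
  exists t, [/\ 0 < t, t <= x, t <= y & t <= z].
Proof.
move=> hx hy hz; exists (Num.min x (Num.min y z)).
rewrite !lt_min hx hy hz !ge_min !lexx /= !orbT; by [].
Qed.

Section Helpers.
Variables (R : realType) (d1 d2 : nat).
Local Notation C := (R[i]).
Local Notation n := (d1 * d2)%N.
Local Notation Re := complex.Re.
Local Notation Im := complex.Im.
Local Notation p := (@pidx d1 d2).
Local Notation u := (@unpidx d1 d2).
Local Notation pt := (@ptrans2 R d1 d2).

Lemma pidxK i j : u (p i j) = (i, j).
Proof. by rewrite /unpidx /pidx /mxvec_index cast_ordK enum_rankK. Qed.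

Lemma unpidxK k : p (u k).1 (u k).2 = k.
Proof.
rewrite /unpidx /pidx /mxvec_index -surjective_pairing enum_valK.
by rewrite cast_ordKV.
Qed.

Definition phi (X W : 'M[C]_n) : C := \tr (X *m pt (entconj W)).

Definition sig (kl : 'I_n * 'I_n) : 'I_n * 'I_n :=
  (p (u kl.2).1 (u kl.1).2, p (u kl.1).1 (u kl.2).2).

Lemma sigK : involutive sig.
Proof.
case=> k l; rewrite /sig /= !pidxK /=.
by rewrite !unpidxK.
Qed.

Lemma phiE X W : phi X W =
  \sum_(kl : 'I_n * 'I_n) X kl.1 kl.2 * Num.conj (W (sig kl).1 (sig kl).2).
Proof.
rewrite /phi /mxtrace; under eq_bigr do rewrite mxE.
rewrite pair_bigA /=; apply: eq_bigr => -[k l] _ /=.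
by rewrite !mxE.
Qed.

Lemma sum_sig (F : 'I_n * 'I_n -> C) : \sum_kl F (sig kl) = \sum_kl F kl.
Proof. by rewrite [RHS](reindex_inj (can_inj sigK)). Qed.

Lemma sum_sigR (F : 'I_n * 'I_n -> R) : \sum_kl F (sig kl) = \sum_kl F kl.
Proof. by rewrite [RHS](reindex_inj (can_inj sigK)). Qed.

Lemma phi_conj X W : phi X W = Num.conj (phi W X).
Proof.
rewrite !phiE rmorph_sum /= -sum_sig; apply: eq_bigr => kl _.
rewrite rmorphM /= conjCK mulrC; congr (_ * _).
by rewrite !pidxK /= !unpidxK.
Qed.

Lemma swapK0 : True. Proof. exact I. Qed.
Lemma swapK : involutive (fun kl : 'I_n * 'I_n => (kl.2, kl.1)).
Proof. by case. Qed.

Lemma phi_tr X W : phi X^T W^T = phi X W.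
Proof.
rewrite !phiE (reindex_inj (can_inj swapK)); apply: eq_bigr => -[k l] _ /=.
by rewrite !mxE.
Qed.


Lemma conjE (x : C) : Num.conj x = conjc x.
Proof.
have [->|nz] := eqVneq x 0; first by rewrite rmorph0 conjc0.
by apply: (mulfI nz); rewrite -normCK sqr_normc.
Qed.

Lemma ReD (x y : C) : Re (x + y) = Re x + Re y.
Proof. by case: x => a b; case: y => c d. Qed.
Lemma ImD (x y : C) : Im (x + y) = Im x + Im y.
Proof. by case: x => a b; case: y => c d. Qed.
Lemma Re0 : Re (0 : C) = 0. Proof. by []. Qed.
Lemma ReM (x y : C) : Re (x * y) = Re x * Re y - Im x * Im y.
Proof. by case: x => a b; case: y => c d. Qed.
Lemma ImM (x y : C) : Im (x * y) = Re x * Im y + Im x * Re y.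
Proof. by case: x => a b; case: y => c d. Qed.
Lemma ReJ (x : C) : Re (Num.conj x) = Re x.
Proof. by rewrite conjE; case: x. Qed.
Lemma ImJ (x : C) : Im (Num.conj x) = - Im x.
Proof. by rewrite conjE; case: x. Qed.

Lemma Re_sum (I : finType) (F : I -> C) : Re (\sum_i F i) = \sum_i Re (F i).
Proof. exact: (big_morph _ ReD Re0). Qed.

Lemma abs2_ge0 (x : C) : 0 <= abs2 x.
Proof. by rewrite /abs2 addr_ge0 // sqr_ge0. Qed.

Lemma abs2M (x y : C) : abs2 (x * y) = abs2 x * abs2 y.
Proof. rewrite /abs2 ReM ImM; ring. Qed.

Lemma abs2J (x : C) : abs2 (Num.conj x) = abs2 x.
Proof. by rewrite /abs2 ReJ ImJ sqrrN. Qed.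

Lemma abs2D_le (x y : C) : abs2 (x + y) <= 2 * abs2 x + 2 * abs2 y.
Proof.
rewrite /abs2 ReD ImD.
have h1 := sqr_ge0 (Re x - Re y); have h2 := sqr_ge0 (Im x - Im y).
nra.
Qed.

Lemma Re_mul_le (x y : C) : Re (x * y) <= (abs2 x + abs2 y) / 2.
Proof.
rewrite /abs2 ReM.
have h1 := sqr_ge0 (Re x - Re y); have h2 := sqr_ge0 (Im x + Im y).
nra.
Qed.

Lemma Re_le_abs (x : C) : Re x <= `|Re x|.
Proof. exact: ler_norm. Qed.

Definition frob2 (X : 'M[C]_n) : R := \sum_(kl : 'I_n * 'I_n) abs2 (X kl.1 kl.2).

Lemma frob_distE (B A : 'M[C]_n) : frob_dist2 B A = frob2 (B - A).
Proof.
rewrite /frob_dist2 /frob2 pair_bigA /=; apply: eq_bigr => -[k l] _ /=.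
by rewrite !mxE.
Qed.

Lemma Re_phi_le X : Re (phi X X) <= frob2 X.
Proof.
rewrite phiE Re_sum.
apply: (@le_trans _ _ (\sum_kl (abs2 (X kl.1 kl.2) + abs2 (X (sig kl).1 (sig kl).2)) / 2)).
  apply: ler_sum => kl _; apply: le_trans (Re_mul_le _ _) _.
  by rewrite abs2J.
rewrite -mulr_suml big_split /= (sum_sigR (fun kl => abs2 (X kl.1 kl.2))).
rewrite /frob2; set S := \sum_kl _.
lra.
Qed.

Lemma phi_addE (X D : 'M[C]_n) :
  phi (X + D) (X + D) = phi X X + phi D X + phi X D + phi D D.
Proof.
rewrite !phiE -!big_split; apply: eq_bigr => kl _ /=.
rewrite !mxE rmorphD /=; ring.
Qed.

Lemma phi_lin2 (a b : C) (D1 D2 W : 'M[C]_n) :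
  phi (a *: D1 + b *: D2) W = a * phi D1 W + b * phi D2 W.
Proof.
rewrite !phiE !mulr_sumr -big_split; apply: eq_bigr => kl _ /=.
rewrite !mxE; ring.
Qed.

Lemma phi_addl (X Y W : 'M[C]_n) : phi (X + Y) W = phi X W + phi Y W.
Proof.
rewrite !phiE -big_split; apply: eq_bigr => kl _ /=.
rewrite !mxE; ring.
Qed.


Lemma ctrmxD (X Y : 'M[C]_n) : ctrmx (X + Y) = ctrmx X + ctrmx Y.
Proof. by apply/matrixP => a b; rewrite !mxE rmorphD. Qed.
Lemma ctrmxZ (c : C) (X : 'M[C]_n) : ctrmx (c *: X) = Num.conj c *: ctrmx X.
Proof. by apply/matrixP => a b; rewrite !mxE rmorphM. Qed.
Lemma ctrmx1 : ctrmx (1%:M : 'M[C]_n) = 1%:M.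
Proof. by rewrite /ctrmx /entconj map_mx1 trmx1. Qed.
Lemma ctrmxM (X Y : 'M[C]_n) : ctrmx (X *m Y) = ctrmx Y *m ctrmx X.
Proof. by rewrite /ctrmx /entconj map_mxM trmx_mul. Qed.
Lemma ctrmx_tr (X : 'M[C]_n) : ctrmx X^T = entconj X.
Proof. by apply/matrixP => a b; rewrite !mxE. Qed.
Lemma entconj_tr (X : 'M[C]_n) : entconj X^T = ctrmx X.
Proof. by apply/matrixP => a b; rewrite !mxE. Qed.
Lemma entconjM (X Y : 'M[C]_n) : entconj (X *m Y) = entconj X *m entconj Y.
Proof. by rewrite /entconj map_mxM. Qed.
Lemma entconj1 : entconj (1%:M : 'M[C]_n) = 1%:M.
Proof. by rewrite /entconj map_mx1. Qed.

Lemma sum_delta (F : 'I_n -> C) (k : 'I_n) : \sum_a (a == k)%:R * F a = F k.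
Proof.
rewrite (bigD1 k) //= eqxx mul1r big1 ?addr0 // => a /negPf ->.
by rewrite mul0r.
Qed.

Section Proj.
Variables (k l : 'I_n) (al : C).
Hypothesis hkl : (k != l) || (al == 0).

Definition vv (a : 'I_n) : C := (a == k)%:R + al * (a == l)%:R.
Definition rr : C := 1 + Num.conj al * al.
Definition Pm : 'M[C]_n := \matrix_(a, b) (rr^-1 * (vv a * Num.conj (vv b))).

Lemma vvJ a : Num.conj (vv a) = (a == k)%:R + Num.conj al * (a == l)%:R.
Proof. by rewrite /vv rmorphD rmorphM /= !rmorph_nat. Qed.

Lemma sum_vv (F : 'I_n -> C) : \sum_a vv a * F a = F k + al * F l.
Proof.
rewrite /vv; under eq_bigr do rewrite mulrDl -mulrA.
by rewrite big_split /= -mulr_sumr !sum_delta.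
Qed.

Lemma sum_cvv (F : 'I_n -> C) : \sum_a Num.conj (vv a) * F a = F k + Num.conj al * F l.
Proof.
under eq_bigr do rewrite vvJ mulrDl -mulrA.
by rewrite big_split /= -mulr_sumr !sum_delta.
Qed.

Lemma norm_vv : \sum_a Num.conj (vv a) * vv a = rr.
Proof.
rewrite sum_cvv /vv /rr eqxx (eq_sym l k).
case/orP: hkl => [/negPf -> | /eqP ->].
  by rewrite !mulr0 !addr0 eqxx add0r mulr1.
by rewrite rmorph0 !mul0r !addr0.
Qed.

Lemma Re_rr : Re rr = 1 + abs2 al.
Proof. rewrite /rr ReD ReM ReJ ImJ /abs2 /=; ring. Qed.
Lemma Im_rr : Im rr = 0.
Proof. by rewrite /rr ImD ImM ReJ ImJ /=; ring. Qed.

Lemma rr_neq0 : rr != 0.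
Proof.
apply/eqP => h; have := Re_rr; rewrite h Re0 => h2.
have := abs2_ge0 al; lra.
Qed.

Lemma rrJ : Num.conj rr = rr.
Proof. by rewrite /rr rmorphD rmorph1 rmorphM /= conjCK mulrC. Qed.

Lemma PmM : Pm *m Pm = Pm.
Proof.
apply/matrixP => a b; rewrite !mxE.
under eq_bigr do rewrite !mxE.
have -> : \sum_c (rr^-1 * (vv a * Num.conj (vv c))) * (rr^-1 * (vv c * Num.conj (vv b)))
  = rr^-1 * (vv a * Num.conj (vv b)) * (rr^-1 * \sum_c Num.conj (vv c) * vv c).
  rewrite mulr_sumr mulr_sumr; apply: eq_bigr => c _; ring.
by rewrite norm_vv mulVf ?rr_neq0 // mulr1.
Qed.

Lemma PmH : ctrmx Pm = Pm.
Proof.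
apply/matrixP => a b; rewrite !mxE !rmorphM fmorphV /= rrJ conjCK.
by rewrite [vv a * _]mulrC.
Qed.

Lemma tr_PmY (Y : 'M[C]_n) : \tr (Pm *m Y) =
  rr^-1 * (Y k k + al * Y k l + Num.conj al * Y l k + Num.conj al * al * Y l l).
Proof.
rewrite /mxtrace.
have -> : \sum_a (Pm *m Y) a a = rr^-1 * \sum_a vv a * (\sum_b Num.conj (vv b) * Y b a).
  rewrite mulr_sumr; apply: eq_bigr => a _; rewrite !mxE mulr_sumr mulr_sumr.
  by apply: eq_bigr => b _; rewrite mxE; ring.
under eq_bigr do rewrite sum_cvv.
rewrite sum_vv; congr (_ * _); ring.
Qed.

End Proj.


Lemma unitary_E (P : 'M[C]_n) (c : C) : P *m P = P -> ctrmx P = P ->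
  c + Num.conj c + Num.conj c * c = 0 ->
  ctrmx (1%:M + c *: P) *m (1%:M + c *: P) = 1%:M.
Proof.
move=> hPP hPH hc.
rewrite ctrmxD ctrmx1 ctrmxZ hPH mulmxDl mul1mx mulmxDr mulmx1 -scalemxAl.
rewrite -scalemxAr hPP scalerA -addrA.
have -> : c *: P + (Num.conj c *: P + (Num.conj c * c) *: P) =
  (c + Num.conj c + Num.conj c * c) *: P by rewrite !scalerDl addrA.
by rewrite hc scale0r addr0.
Qed.

Lemma sv_E (E A : 'M[C]_n) : ctrmx E *m E = 1%:M ->
  char_poly (ctrmx (E *m A *m E^T) *m (E *m A *m E^T)) = char_poly (ctrmx A *m A).
Proof.
move=> hE.
have h1 : E^T *m entconj E = 1%:M.
  by have := congr1 trmx hE; rewrite trmx_mul trmx1 /ctrmx trmxK.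
rewrite ctrmxM ctrmx_tr ctrmxM !mulmxA.
rewrite -[entconj E *m ctrmx A *m ctrmx E *m E]mulmxA hE mulmx1.
rewrite -[entconj E *m ctrmx A *m A]mulmxA.
exact: char_poly_sim.
Qed.

Lemma B_expand (P A : 'M[C]_n) (c : C) :
  (1%:M + c *: P) *m A *m (1%:M + c *: P)^T =
  A + (c *: (P *m A + A *m P^T) + (c * c) *: (P *m A *m P^T)).
Proof.
rewrite linearD /= trmx1 linearZ /= mulmxDl mul1mx.
rewrite !mulmxDr !mulmx1 mulmxDl -!scalemxAl -!scalemxAr.
by rewrite scalerA scalerDr !addrA.
Qed.

Lemma frob_bound (c : C) (D1 D2 : 'M[C]_n) : abs2 c <= 1 ->
  frob2 (c *: D1 + (c * c) *: D2) <=
  abs2 c * \sum_(kl : 'I_n * 'I_n) (2 * abs2 (D1 kl.1 kl.2) + 2 * abs2 (D2 kl.1 kl.2)).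
Proof.
move=> hc; rewrite /frob2 mulr_sumr; apply: ler_sum => kl _; rewrite !mxE.
apply: le_trans (abs2D_le _ _) _.
rewrite !abs2M.
have h1 := abs2_ge0 c; have h2 := abs2_ge0 (D1 kl.1 kl.2);
have h3 := abs2_ge0 (D2 kl.1 kl.2).
have h4 : abs2 c * (abs2 c * abs2 (D2 kl.1 kl.2)) <= 1 * (abs2 c * abs2 (D2 kl.1 kl.2)).
  by apply: ler_wpM2r => //; exact: mulr_ge0.
rewrite mul1r in h4.
nra.
Qed.

Lemma key (sigma : 'I_n -> R) (A : 'M[C]_n) (hn : (0 < n)%N)
  (k l : 'I_n) (al : C) (hkl : (k != l) || (al == 0)) :
  local_minimizer sigma A ->
  Im (\tr (Pm k l al *m (A *m pt (entconj A)))) = 0.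
Proof.
move=> [[hAT hsv] [eps [heps hmin]]].
set P := Pm k l al; set Y := A *m pt (entconj A); set q := \tr (P *m Y).
have [//|hq] := eqVneq (Im q) 0; exfalso.
have hPP : P *m P = P by exact: PmM.
have hPH : ctrmx P = P by exact: PmH.
set D1 := P *m A + A *m P^T; set D2 := P *m A *m P^T.
set r2 := phi D2 A.
set K := \sum_(kl : 'I_n * 'I_n) (2 * abs2 (D1 kl.1 kl.2) + 2 * abs2 (D2 kl.1 kl.2)).
have hK : 0 <= K.
  by apply: sumr_ge0 => kl _; apply: addr_ge0; apply: mulr_ge0 => //; exact: abs2_ge0.
set N := 1 + abs2 r2 + K.
have hN : 0 <= N by have := abs2_ge0 r2; rewrite /N; lra.
set M0 := N + 2 * `|Re q|.
have hM0 : 0 <= M0 by have := normr_ge0 (Re q); rewrite /M0; lra.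
have hIq : 0 < `|Im q| by rewrite normr_gt0.
have hM1 : 0 < M0 + 1 by lra.
have hK1 : 0 < 4 * K + 1 by lra.
have [t [ht0 ht1 ht2 ht3]] := @small_t R (1/2) (`|Im q| / (M0 + 1)) (eps / (4 * K + 1))
  ltac:(lra) (divr_gt0 hIq hM1) (divr_gt0 heps hK1).
rewrite ler_pdivlMr // in ht2; rewrite ler_pdivlMr // in ht3.
set s := if 0 < Im q then t else - t.
have hs2 : s ^+ 2 = t ^+ 2 by rewrite /s; case: ifP => _ //; rewrite sqrrN.
have hsq : s * Im q = t * `|Im q|.
  rewrite /s; case: ifP => h.
    by rewrite gtr0_norm.
  rewrite ler0_norm ?mulrN ?mulNr //.
  by rewrite leNgt h.
set w := 1 + s ^+ 2.
have hw : 0 < w by rewrite /w hs2; have := sqr_ge0 t; lra.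
have hw0 : w != 0 by rewrite gt_eqF.
set a := -2 * s ^+ 2 / w; set b := 2 * s / w.
set c : C := Complex a b.
have hc : c + Num.conj c + Num.conj c * c = 0.
  rewrite conjE /c /=; apply/eqP; rewrite eq_complex /=; apply/andP; split; apply/eqP.
    rewrite /a /b /w; field; exact: hw0.
  ring.
have habs : abs2 c = 4 * t ^+ 2 / w.
  rewrite /abs2 /c /= /a /b -hs2 /w; field; rewrite -/w; exact: hw0.
have habs2 : abs2 c <= 4 * t ^+ 2.
  rewrite habs ler_pdivrMr // ler_peMr //; last by rewrite /w hs2; have := sqr_ge0 t; lra.
  by apply: mulr_ge0 => //; exact: sqr_ge0.
have habs1 : abs2 c <= 1.
  apply: le_trans habs2 _; nra.
set E := 1%:M + c *: P.
have hE : ctrmx E *m E = 1%:M by exact: unitary_E.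
set B := E *m A *m E^T.
have hfeas : feasible sigma B.
  split; first by rewrite /B !trmx_mul trmxK hAT mulmxA.
  by rewrite /has_singular_values sv_E.
set Dl := c *: D1 + (c * c) *: D2.
have hBe : B = A + Dl by rewrite /B /E B_expand.
have hdist : frob_dist2 B A < eps.
  rewrite frob_distE hBe addrC addKr.
  apply: le_lt_trans (@frob_bound c D1 D2 habs1) _.
  rewrite -/K.
  have : abs2 c * K <= 4 * t ^+ 2 * K by apply: ler_wpM2r.
  nra.
have := hmin B hfeas hdist; apply/negP; rewrite -ltNge.
have eobj : forall X, objective X = Re (phi X X) / n%:R by [].
rewrite !eobj ltr_pM2r ?invr_gt0 ?ltr0n //.
have hD1 : phi D1 A = q + q.
  rewrite /D1 phi_addl; congr (_ + _); first by rewrite /phi /q /Y mulmxA.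
  by rewrite -phi_tr trmx_mul trmxK hAT /phi /q /Y mulmxA.
have hDA : Re (phi Dl A) = Re (c * q) + Re (c * q) + Re (c * (c * r2)).
  by rewrite /Dl phi_lin2 hD1 mulrDr !ReD -/r2 mulrA.
rewrite hBe phi_addE !ReD [phi A Dl]phi_conj ReJ hDA.
have e1 : Re (c * (c * r2)) <= (abs2 c + abs2 c * abs2 r2) / 2.
  by rewrite -abs2M; exact: Re_mul_le.
have e2 : Re (phi Dl Dl) <= abs2 c * K.
  by apply: le_trans (Re_phi_le _) _; exact: frob_bound.
have e3 : Re (c * q) = a * Re q - b * Im q by rewrite ReM.
suff : 4 * (a * Re q) - 4 * (b * Im q) + abs2 c * N < 0.
  rewrite /N; nra.
have hbq : b * Im q = 2 * (t * `|Im q|) / w.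
  by rewrite -hsq /b; field; exact: hw0.
have haq : a = - 2 * t ^+ 2 / w by rewrite /a hs2.
rewrite hbq haq habs.
have -> : 4 * (-2 * t ^+ 2 / w * Re q) - 4 * (2 * (t * `|Im q|) / w) + 4 * t ^+ 2 / w * N
   = w^-1 * (-8 * t ^+ 2 * Re q - 8 * t * `|Im q| + 4 * t ^+ 2 * N).
  by field; exact: hw0.
rewrite pmulr_rlt0 ?invr_gt0 //.
have f1 : t * M0 < `|Im q| by nra.
have f2 : - Re q <= `|Re q| by rewrite -normrN ler_norm.
have f3 : t * (t * M0) < t * `|Im q| by rewrite ltr_pM2l.
have f4 : t ^+ 2 * (- Re q) <= t ^+ 2 * `|Re q| by apply: ler_wpM2l => //; exact: sqr_ge0.
rewrite /M0 in f3; nra.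
Qed.

Lemma Im_rrV (al Q : C) : Im ((rr al)^-1 * Q) = 0 -> Im Q = 0.
Proof.
have -> : rr al = ((1 + abs2 al)%:C)%C.
  by apply/eqP; rewrite eq_complex Re_rr Im_rr !eqxx.
rewrite -fmorphV ImM /= mul0r addr0 => /eqP; rewrite mulf_eq0 => /orP[|/eqP //].
rewrite invr_eq0 => /eqP h; have := abs2_ge0 al; lra.
Qed.

Lemma herm_from (Y : 'M[C]_n) :
  (forall k l al, (k != l) || (al == 0) -> Im (\tr (Pm k l al *m Y)) = 0) ->
  ctrmx Y = Y.
Proof.
move=> H.
have hd : forall k, Im (Y k k) = 0.
  move=> k; have := H k k 0; rewrite !eqxx orbT => /(_ isT).
  rewrite tr_PmY => /Im_rrV; rewrite rmorph0 !mul0r !addr0 //.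
have h1 : forall k l, k != l -> Im (Y k l) + Im (Y l k) = 0.
  move=> k l hkl; have := H k l 1; rewrite hkl => /(_ isT).
  rewrite tr_PmY => /Im_rrV; rewrite rmorph1 !mul1r !ImD hd hd; lra.
have h2 : forall k l, k != l -> Re (Y k l) - Re (Y l k) = 0.
  move=> k l hkl; have := H k l (Complex 0 1); rewrite hkl => /(_ isT).
  rewrite tr_PmY => /Im_rrV; rewrite !ImD !ImM conjE /= hd hd; lra.
apply/matrixP => k l; rewrite !mxE conjE.
have [<-|hkl] := eqVneq l k.
  by case e : (Y l l) => [x y] /=; have := hd l; rewrite e /= => ->; rewrite oppr0.
have hkl' : k != l by rewrite eq_sym.
move: (h1 k l hkl') (h2 k l hkl').
case: (Y k l) => x1 y1; case: (Y l k) => x2 y2 /= ha hb.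
apply/eqP; rewrite eq_complex /=; apply/andP; split; apply/eqP; lra.
Qed.

End Helpers.

Theorem proposition8 (R : realType) (d1 d2 : nat)
  (hd1 : (3 <= d1)%N) (hodd : odd d1)
  (sigma : 'I_(d1 * d2) -> R) (hsigma : forall k, 0 <= sigma k)
  (A : 'M[R[i]]_(d1 * d2)) :
  local_minimizer sigma A ->
  is_hermitian (A *m ptrans2 (entconj A)).
Proof.
move=> hmin.
have [hd2|hd2] := eqVneq d2 0.
  apply/matrixP => i j; exfalso; move: (ltn_ord i); move: (nat_of_ord i) => m; by rewrite hd2 muln0.
have hn : (0 < d1 * d2)%N by rewrite muln_gt0 (leq_trans _ hd1) // lt0n hd2.
apply: (@herm_from R d1 d2) => k l al hkl.
exact: (@key R d1 d2 sigma A hn k l al hkl hmin).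
Qed.
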